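(* There is a constant $C>0$ such that for every $n$ and every set $T\subseteq V_n$, the extension complexity of $\operatorname{dom}(P_{T\text{-cut}}(n))$ is at most $C\, n^2\, 2^{|T|}$.
   Context: $K_n=(V_n,E_n)$ is the complete graph on $n$ nodes. For $T\subseteq V_n$, a $T$-cut is an edge set $\delta(S)=\{\{v,w\}\in E_n : v\in S, w\notin S\}$ for some $S\subseteq V_n$ with $|S\cap T|$ odd. $P_{T\text{-cut}}(n)$ is the convex hull of characteristic vectors of $T$-cuts and $\operatorname{dom}(P_{T\text{-cut}}(n)) = P_{T\text{-cut}}(n)+\mathbb{R}^{E_n}_+$. Extension complexity $\operatorname{xc}(P)$ is the minimum number of facets of a polyhedron $Q$ with $P=\pi(Q)$ for a linear map $\pi$. *)

(* Defs.v *)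
From HB Require Import structures.
From mathcomp Require Import all_boot all_order all_algebra.
Set Implicit Arguments. Unset Strict Implicit. Unset Printing Implicit Defensive.
Import Order.TTheory GRing.Theory Num.Theory.
Local Open Scope ring_scope.

Section Defs.
Variable R : realFieldType.

Definition edge (n : nat) := {e : {set 'I_n} | #|e| == 2%N}.

(* characteristic vector of delta(S): e = {v,w} is in delta(S) iff exactly
   one endpoint of e lies in S *)
Definition cut_vec (n : nat) (S : {set 'I_n}) : edge n -> R :=
  fun e => if #|val e :&: S| == 1%N then 1 else 0.

Definition Tcut_set (n : nat) (T S : {set 'I_n}) : bool := odd #|S :&: T|.

Definition PTcut (n : nat) (T : {set 'I_n}) : (edge n -> R) -> Prop :=
  fun x => exists lam : {set 'I_n} -> R,
    (forall S, 0 <= lam S) /\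
    (forall S, ~~ Tcut_set T S -> lam S = 0) /\
    (\sum_(S : {set 'I_n}) lam S = 1) /\
    (forall e, x e = \sum_(S : {set 'I_n}) lam S * cut_vec S e).

Definition domTcut (n : nat) (T : {set 'I_n}) : (edge n -> R) -> Prop :=
  fun x => exists y, PTcut T y /\ forall e, y e <= x e.

Definition point (d : nat) := 'I_d -> R.

Definition dotp (d : nat) (c x : point d) : R := \sum_(i < d) c i * x i.

Definition polyh (d m : nat) (A : 'I_m -> point d) (b : 'I_m -> R) :
  point d -> Prop := fun y => forall j, dotp (A j) y <= b j.

Definition aff_indep (d k : nat) (p : 'I_k -> point d) : Prop :=
  forall lam : 'I_k -> R, \sum_(i < k) lam i = 0 ->
    (forall t, \sum_(i < k) lam i * p i t = 0) -> forall i, lam i = 0.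

Definition has_aff_indep (d : nat) (X : point d -> Prop) (k : nat) : Prop :=
  exists p : 'I_k -> point d, (forall i, X (p i)) /\ aff_indep p.

(* dim X = k - 1 (so k = 0 means X is empty, dimension -1) *)
Definition dim_eq_pred (d : nat) (X : point d -> Prop) (k : nat) : Prop :=
  has_aff_indep X k /\ ~ has_aff_indep X k.+1.

Definition face (d : nat) (Q F : point d -> Prop) : Prop :=
  exists (c : point d) (delta : R),
    (forall x, Q x -> dotp c x <= delta) /\
    (forall x, F x <-> (Q x /\ dotp c x = delta)).

Definition facet (d : nat) (Q F : point d -> Prop) : Prop :=
  face Q F /\ exists k, dim_eq_pred Q k.+1 /\ dim_eq_pred F k.

Definition facets_at_most (d : nat) (Q : point d -> Prop) (k : nat) : Prop :=
  exists Fs : 'I_k -> (point d -> Prop),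
    forall F, facet Q F -> exists j, forall x, F x <-> Fs j x.

Definition xc_at_most (I : finType) (P : (I -> R) -> Prop) (k : nat) : Prop :=
  exists (d m : nat) (A : 'I_m -> point d) (b : 'I_m -> R)
         (M : I -> point d),
    facets_at_most (polyh A b) k /\
    (forall x, P x <-> exists y, polyh A b y /\ forall e, x e = dotp (M e) y).

End Defs.

(* Main.v *)
Require Import Defs.
From HB Require Import structures.
From mathcomp Require Import all_boot all_order all_algebra.
From mathcomp Require Import ring lra zify.
From Stdlib Require Import Classical ClassicalEpsilon.
Set Implicit Arguments. Unset Strict Implicit. Unset Printing Implicit Defensive.
Import Order.TTheory GRing.Theory Num.Theory.
Local Open Scope ring_scope.

Section Avg.
Variable R : realFieldType.

Lemma sum_const_ord m (x : R) : \sum_(i < m) x = x * m%:R.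
Proof. by rewrite sumr_const card_ord mulr_natr. Qed.

Lemma avg_le m (a0 be : R) (a : 'I_m -> R) : a0 <= be -> (forall i, a i <= be) ->
  (a0 + \sum_i a i) / m.+1%:R <= be.
Proof.
move=> h0 h; rewrite ler_pdivrMr ?ltr0Sn //.
have : \sum_i a i <= \sum_(i < m) be by apply: ler_sum.
rewrite sum_const_ord.
rewrite -natr1; lra.
Qed.

Lemma avg_lt m (a0 be : R) (a : 'I_m -> R) (i : 'I_m) : a0 <= be -> (forall i, a i <= be) ->
  a i < be -> (a0 + \sum_i a i) / m.+1%:R < be.
Proof.
move=> h0 h hi; rewrite ltr_pdivrMr ?ltr0Sn //.
have h1 : \sum_(j < m | j != i) a j <= \sum_(j < m | j != i) be by apply: ler_sum => j _.
have e1 : \sum_(j < m) a j = a i + \sum_(j < m | j != i) a j by rewrite (bigD1 i).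
have e2 : \sum_(j < m) be = be + \sum_(j < m | j != i) be by rewrite (bigD1 i).
rewrite sum_const_ord in e2.
rewrite -natr1; lra.
Qed.

Lemma avg_eq m (be : R) (a : 'I_m -> R) : (forall i, a i = be) ->
  (be + \sum_i a i) / m.+1%:R = be.
Proof.
move=> h; rewrite (eq_bigr (fun _ => be)) // sum_const_ord -natr1.
field; rewrite natr1; exact: lt0r_neq0 (ltr0Sn _ _).
Qed.
End Avg.
Section Facets.
Variable R : realFieldType.
Variable d : nat.
Notation pt := (point R d).

Lemma dotp_sum (I : finType) (c : pt) (u : I -> pt) :
  dotp c (fun t => \sum_i u i t) = \sum_i dotp c (u i).
Proof. rewrite /dotp. under eq_bigr do rewrite mulr_sumr. exact: exchange_big. Qed.

Lemma dotp_lin (c y z : pt) (a s : R) :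
  dotp c (fun t => a * y t + s * z t) = a * dotp c y + s * dotp c z.
Proof.
rewrite /dotp mulr_sumr mulr_sumr -big_split /=; apply: eq_bigr => i _; ring.
Qed.

Lemma dotp_ext (c y z : pt) : y =1 z -> dotp c y = dotp c z.
Proof. by move=> h; rewrite /dotp; apply: eq_bigr => i _; rewrite h. Qed.

Definition ext k (p : 'I_k -> pt) (z : pt) : 'I_k.+1 -> pt :=
  fun i => if unlift ord_max i is Some j then p j else z.

Lemma widen_lift k (i : 'I_k) : widen_ord (leqnSn k) i = lift ord_max i.
Proof. by apply: val_inj; rewrite /= /bump leqNgt ltn_ord. Qed.

Lemma ext_widen k p z (i : 'I_k) : @ext k p z (widen_ord (leqnSn k) i) = p i.
Proof. by rewrite /ext widen_lift liftK. Qed.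

Lemma ext_max k p z : @ext k p z ord_max = z.
Proof. by rewrite /ext unlift_none. Qed.

Lemma ext_indep k p z (g : pt) gam : aff_indep p -> (forall i, dotp g (p i) = gam) ->
  dotp g z != gam -> aff_indep (@ext k p z).
Proof.
move=> hp hg hz lam hs ht.
set lm := lam ord_max.
set l' := fun i : 'I_k => lam (widen_ord (leqnSn k) i).
have hs' : \sum_(i < k) l' i = - lm.
  by move: hs; rewrite big_ord_recr /= => /eqP; rewrite addr_eq0 => /eqP.
have key : \sum_(i < k.+1) lam i * dotp g (ext p z i) = 0.
  transitivity (dotp g (fun t => \sum_(i < k.+1) lam i * ext p z i t)).
    rewrite (dotp_sum g (fun i t => lam i * ext p z i t)).
    apply: eq_bigr => i _; rewrite /dotp mulr_sumr; apply: eq_bigr => t _; ring.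
  by rewrite /dotp; apply: big1 => t _; rewrite ht mulr0.
move: key; rewrite big_ord_recr /= ext_max.
under eq_bigr do rewrite ext_widen hg.
rewrite -mulr_suml hs' => key.
have hlm : lm = 0.
  have : lm * (dotp g z - gam) = 0 by rewrite -[RHS]key /lm; ring.
  by move/eqP; rewrite mulf_eq0 subr_eq0 (negbTE hz) orbF => /eqP.
have hl0 : forall i, l' i = 0.
  apply: hp; first by rewrite hs' hlm oppr0.
  move=> t; move: (ht t); rewrite big_ord_recr /= ext_max -/lm hlm mul0r addr0.
  by under eq_bigr do rewrite ext_widen.
move=> i; case: (unliftP ord_max i) => [j ->|->] //.
by rewrite -widen_lift; apply: hl0.
Qed.


Lemma has_sub (X Y : pt -> Prop) k : (forall x, X x -> Y x) ->
  has_aff_indep X k -> has_aff_indep Y k.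
Proof. move=> h [p [hp hi]]; exists p; split => // i; exact: h. Qed.

Lemma dotp_avg m (a f0 : pt) (u : 'I_m -> pt) (s : R) :
  dotp a (fun t => (f0 t + \sum_j u j t) * s) = (dotp a f0 + \sum_j dotp a (u j)) * s.
Proof.
rewrite -(dotp_sum a u) /dotp -big_split /= mulr_suml.
by apply: eq_bigr => i _; ring.
Qed.

Lemma facets_polyh m (A : 'I_m -> pt) (b : 'I_m -> R) :
  facets_at_most (polyh A b) m.+1.
Proof.
set Q := polyh A b.
exists (fun j x => if unlift ord_max j is Some j' then Q x /\ dotp (A j') x = b j' else False).
move=> F [[c [del [hval hF]]] [k [[hQk hQk1] [hFk hFk1]]]].
case: (classic (exists f0, F f0)) => [[f0 hf0]|hemp]; last first.
  by exists ord_max => x; rewrite unlift_none; split => // hx; apply: hemp; exists x.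
have hFQ : forall x, F x -> Q x by move=> x /hF [].
have hFc : forall x, F x -> dotp c x = del by move=> x /hF [].
have [z [hzQ hzc]] : exists z, Q z /\ dotp c z < del.
  apply: NNPP => hn; apply: hFk1; apply: has_sub hQk => x hx; apply/hF; split => //.
  apply/eqP; rewrite eq_le hval //=; apply: contraT; rewrite -ltNge => hlt.
  by case: hn; exists x.
case: (classic (exists j, (forall y, F y -> dotp (A j) y = b j) /\
          exists z', Q z' /\ dotp (A j) z' < b j)) => [[j [hjF [z' [hz'Q hz']]]]|hno].
  exists (lift ord_max j) => x; rewrite liftK; split.
    by move=> hx; split; [exact: hFQ | exact: hjF].
  case=> hxQ hxj; apply/hF; split => //.
  apply: NNPP => hne.
  have hlt : dotp c x < del by rewrite lt_neqAle hval // andbT; apply/eqP.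
  case: hFk => p [hpF hpi].
  have hi1 : aff_indep (ext p x).
    by apply: (ext_indep (g := c) (gam := del)) => // [i|]; [exact: hFc | rewrite lt_eqF].
  have hi2 : aff_indep (ext (ext p x) z').
    apply: (ext_indep (g := A j) (gam := b j)) => // [i|]; last by rewrite lt_eqF.
    by rewrite /ext; case: (unlift _ i) => [i'|] //; exact: hjF.
  apply: hQk1; exists (ext (ext p x) z'); split => // i.
  rewrite /ext; case: (unlift _ i) => [i'|] //; case: (unlift _ i') => [i''|] //.
  exact: hFQ.
have hJ : forall j, (forall y, F y -> dotp (A j) y = b j) -> forall y, Q y -> dotp (A j) y = b j.
  move=> j hj y hy; apply: NNPP => hne; apply: hno; exists j; split => //; exists y; split => //.
  by rewrite lt_neqAle (hy j) andbT; apply/eqP.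
have hch : forall j, exists y, F y /\
    ((forall y', F y' -> dotp (A j) y' = b j) \/ dotp (A j) y < b j).
  move=> j; case: (classic (forall y', F y' -> dotp (A j) y' = b j)) => h.
    by exists f0; split => //; left.
  apply: NNPP => hn; apply: h => y' hy'; apply: NNPP => hne; apply: hn; exists y'; split => //.
  by right; rewrite lt_neqAle (hFQ _ hy' j) andbT; apply/eqP.
pose yf j := proj1_sig (constructive_indefinite_description _ (hch j)).
have hyf : forall j, F (yf j) /\
    ((forall y', F y' -> dotp (A j) y' = b j) \/ dotp (A j) (yf j) < b j).
  move=> j; exact: (proj2_sig (constructive_indefinite_description _ (hch j))).
pose y0 := fun t => (f0 t + \sum_j yf j t) * (m.+1%:R)^-1.
have hy0 : forall a : pt, dotp a y0 = (dotp a f0 + \sum_j dotp a (yf j)) / m.+1%:R.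
  by move=> a; rewrite /y0 dotp_avg.
have hy0Q : Q y0.
  move=> j; rewrite hy0; apply: avg_le; first exact: (hFQ _ hf0 j).
  by move=> i; exact: (hFQ _ (proj1 (hyf i)) j).
have hy0c : dotp c y0 = del.
  rewrite hy0 hFc //; apply: avg_eq => i; exact: hFc (proj1 (hyf i)).
have hy0s : forall j, dotp (A j) y0 < b j \/ (forall y, F y -> dotp (A j) y = b j).
  move=> j; case: (proj2 (hyf j)) => h; [by right | left].
  rewrite hy0; apply: (avg_lt (i := j)) => //; first exact: (hFQ _ hf0 j).
  by move=> i; exact: (hFQ _ (proj1 (hyf i)) j).
pose D j := dotp (A j) y0 - dotp (A j) z.
pose sl j := b j - dotp (A j) y0.
pose r j := if dotp (A j) y0 < b j then `|D j| / sl j else 0.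
have hr0 : forall j, 0 <= r j.
  move=> j; rewrite /r; case: ifP => // h.
  by apply: divr_ge0 => //; rewrite /sl subr_ge0 ltW.
pose S := \sum_j r j.
have hS0 : 0 <= S by apply: sumr_ge0 => j _.
pose tt := (1 + S)^-1.
have htt : 0 < tt by rewrite invr_gt0; lra.
pose w := fun t => (1 + tt) * y0 t + (- tt) * z t.
have hw : forall a : pt, dotp a w = (1 + tt) * dotp a y0 + (- tt) * dotp a z.
  by move=> a; rewrite /w dotp_lin.
have hwQ : Q w.
  move=> j; rewrite hw.
  case: (hy0s j) => hj; last first.
    have e1 := hJ j hj _ hzQ; have e2 := hJ j hj _ hy0Q; rewrite e1 e2; lra.
  have hsl : 0 < sl j by rewrite /sl subr_gt0.
  have hrj : r j = `|D j| / sl j by rewrite /r hj.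
  have hrS : r j <= S.
    rewrite /S (bigD1 j) //= lerDl; apply: sumr_ge0 => i _; exact: hr0.
  have hD : `|D j| = r j * sl j by rewrite hrj divfK // gt_eqF.
  have hDD : D j <= `|D j| := ler_norm _.
  have h1 : tt * (1 + S) = 1 by rewrite /tt mulVf //; apply: lt0r_neq0; lra.
  have : tt * `|D j| <= sl j.
    rewrite hD.
    have hh : r j * sl j <= (1 + S) * sl j by apply: ler_wpM2r; lra.
    have : tt * (r j * sl j) <= tt * ((1 + S) * sl j) by apply: ler_wpM2l => //; exact: ltW.
    by rewrite [X in _ <= X]mulrA h1 mul1r.
  rewrite /D /sl in hDD *; nra.
have := hval _ hwQ; rewrite hw hy0c; nra.
Qed.

End Facets.

Section Terms.
Variable R : realFieldType.
Definition evalt (V : Type) (L : seq (R * V)) (y : V -> R) := \sum_(p <- L) p.1 * y p.2.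
Definition coef (V : eqType) (L : seq (R * V)) (v : V) := \sum_(p <- L) p.1 * (p.2 == v)%:R.

Lemma coef_eval (V : finType) L (y : V -> R) : \sum_v coef L v * y v = evalt L y.
Proof.
rewrite /coef /evalt; under eq_bigr do rewrite mulr_suml.
rewrite exchange_big /=; apply: eq_bigr => p _.
rewrite (bigD1 p.2) //= eqxx mulr1 big1 ?addr0 // => v hv.
by rewrite eq_sym (negbTE hv) mulr0 mul0r.
Qed.

Lemma key_eval (V : finType) (K : seq (R * V)) (y : V -> R) :
  dotp (fun i : 'I_#|V| => coef K (enum_val i)) (fun i => y (enum_val i)) = evalt K y.
Proof.
rewrite /dotp -coef_eval; symmetry.
rewrite (reindex (@enum_val V V)) //.
by exists enum_rank => i _; [exact: enum_valK | exact: enum_rankK].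
Qed.

Lemma xc_of_terms (I V C : finType) (L : C -> seq (R * V)) (b : C -> R)
   (Mt : I -> seq (R * V)) (P : (I -> R) -> Prop) :
  (forall x, P x <-> exists y : V -> R, (forall j, evalt (L j) y <= b j) /\
       forall e, x e = evalt (Mt e) y) ->
  xc_at_most P #|C|.+1.
Proof.
move=> hP.
exists #|V|, #|C|, (fun j i => coef (L (enum_val j)) (enum_val i)), (fun j => b (enum_val j)),
  (fun e i => coef (Mt e) (enum_val i)).
split; first exact: facets_polyh.
move=> x; split.
  case/hP => y [h1 h2]; exists (fun i => y (enum_val i)); split.
    by move=> j; rewrite key_eval.
  by move=> e; rewrite key_eval.
case=> y' [h1 h2]; apply/hP; exists (fun v => y' (enum_rank v)).
have hy : forall K, evalt K (fun v => y' (enum_rank v)) =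
     dotp (fun i : 'I_#|V| => coef K (enum_val i)) y'.
  move=> K; rewrite -key_eval; apply: dotp_ext => i /=; by rewrite enum_valK.
split.
  move=> j; rewrite hy; have := h1 (enum_rank j); by rewrite enum_rankK.
by move=> e; rewrite hy h2.
Qed.

Lemma xc_empty (I : finType) (P : (I -> R) -> Prop) : (forall x, ~ P x) -> xc_at_most P 0.
Proof.
move=> hP.
have hQ : forall y, ~ polyh (fun (_ : 'I_1) (_ : 'I_0) => 0 : R) (fun _ => -1) y.
  move=> y h; have := h ord0; rewrite /dotp big_ord0; lra.
exists 0, 1, (fun _ _ => 0), (fun _ => -1), (fun _ _ => 0); split.
  exists (fun _ _ => False) => F [_ [k [[[p [hp _]] _] _]]].
  by case: (hQ _ (hp ord0)).
move=> x; split => [/hP //|[y [hy _]]]; by case: (hQ _ hy).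
Qed.
End Terms.
Section Decomp.
Variable R : realFieldType.

Lemma exists_max_seq (T : eqType) (s : seq T) (P : pred T) (f : T -> R) :
  (exists2 v, v \in s & P v) ->
  exists v, [/\ v \in s, P v & forall w, w \in s -> P w -> f w <= f v].
Proof.
elim: s => [[v //]|x s IH [v hv hPv]].
case: (boolP (has P s)) => hs.
  have [u [hu hPu hmax]] := IH (hasP hs).
  case: (boolP (P x && (f u < f x))) => [/andP [hPx hlt]|hno].
    exists x; split; [exact: mem_head | by [] |].
    move=> w; rewrite inE => /orP [/eqP -> //|hw hPw].
    exact: le_trans (hmax w hw hPw) (ltW hlt).
  exists u; split; [by rewrite inE hu orbT | by [] |].
  move=> w; rewrite inE => /orP [/eqP ->|hw hPw]; last exact: hmax.
  move=> hPx; move: hno; rewrite hPx /= -leNgt //.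
have hvx : v = x.
  move: hv; rewrite inE => /orP [/eqP //|hv]; case/negP: hs; apply/hasP; by exists v.
subst v; exists x; split; [exact: mem_head | by [] |].
move=> w; rewrite inE => /orP [/eqP -> //|hw hPw].
case/negP: hs; apply/hasP; by exists w.
Qed.

Lemma exists_max (T : finType) (P : pred T) (f : T -> R) :
  (exists v, P v) -> exists v, P v /\ forall w, P w -> f w <= f v.
Proof.
case=> v hv; have [u [_ hPu hmax]] := @exists_max_seq T (enum T) P f (ex_intro2 _ _ v (mem_enum _ v) hv).
exists u; split => // w hw; apply: hmax => //; exact: mem_enum.
Qed.

Variable n : nat.
Notation V := 'I_n.

Definition cutw (v w : V) (S : {set V}) : R := if (v \in S) != (w \in S) then 1 else 0.

Definition decomp_ok (rho : V -> R) (mu : {set V} -> R) :=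
  (forall S, 0 <= mu S) /\ \sum_S mu S = 1 /\
  (forall S, mu S != 0 -> (forall v, rho v = 0 -> v \in S) /\ (forall v, rho v = 1 -> v \notin S)) /\
  (forall v w, \sum_S mu S * cutw v w S <= `|rho v - rho w|).

Lemma decomp_base (rho : V -> R) : (forall v, rho v = 0 \/ rho v = 1) -> exists mu, decomp_ok rho mu.
Proof.
move=> h; pose S0 := [set v | rho v == 0].
have hs : forall F : {set V} -> R, \sum_S (if S == S0 then 1 else 0) * F S = F S0.
  move=> F; rewrite (bigD1 S0) //= eqxx mul1r big1 ?addr0 // => S /negbTE ->; by rewrite mul0r.
exists (fun S => if S == S0 then 1 else 0); split; [|split; [|split]].
- by move=> S; case: ifP.
- by rewrite -[RHS](hs (fun _ => 1)); apply: eq_bigr => S _; rewrite mulr1.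
- move=> S; case: (eqVneq S S0) => [-> _|hne]; last by move/eqP; case.
  idtac.
  split=> v hv; rewrite inE hv ?eqxx //; exact: oner_neq0.
- move=> v w; rewrite hs /cutw !inE.
  by case: (h v) => ->; case: (h w) => ->; rewrite ?eqxx ?oner_eq0 /= ?subrr ?normr0 ?sub0r ?subr0 ?normrN ?normr1.
Qed.

Lemma step_ineq (a b t x : R) : t * b + (1 - t) = a -> 0 <= t -> t <= 1 -> 0 <= x -> x <= 1 ->
  (x < a -> x <= b) -> (a < x -> x = 1) -> x != a -> b < a ->
  t * `|b - x| + (1 - t) * `|1 - x| <= `|a - x|.
Proof.
move=> ht t0 t1 x0 x1 hb h1 hxa hba.
case: (ltgtP x a) hxa => // hx _.
  have := hb hx => hxb.
  rewrite !ger0_norm ?subr_ge0 //; [lra | exact: ltW].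
have -> := h1 hx.
rewrite subrr normr0 mulr0 addr0 !ler0_norm ?subr_le0; [lra|lra|lra].
Qed.

Lemma decomp_gen N : forall (L : seq R) (rho : V -> R), (size L <= N)%N ->
  (forall v, 0 <= rho v <= 1) -> (forall v, rho v \in L \/ rho v = 0 \/ rho v = 1) ->
  exists mu, decomp_ok rho mu.
Proof.
elim: N => [|N IH] L rho hL hr hv.
  apply: decomp_base => v; case: (hv v) => [h|//]; move: h hL; by case: L {hv}.
case: (boolP [exists v, (0 < rho v) && (rho v < 1)]) => [/existsP hex|/existsPn hno]; last first.
  apply: decomp_base => v; have := hno v; have := hr v; case/andP => h0 h1.
  rewrite negb_and -!leNgt => /orP [h|h]; [left|right]; lra.
have [v0 [/andP [ha0 ha1] hamax]] := exists_max rho hex.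
set a := rho v0 in ha0 ha1 hamax.
have [b [hb0 [hba [hbmax hbval]]]] : exists b, 0 <= b /\ b < a /\
    (forall w, rho w < a -> rho w <= b) /\ (b = 0 \/ exists w, rho w = b /\ rho w < a).
  case: (boolP [exists w, rho w < a]) => [/existsP hex2|/existsPn hno].
    have [w1 [hw1 hw1max]] := exists_max rho hex2.
    exists (rho w1); split; first by case/andP: (hr w1).
    split => //; split => //; right; by exists w1.
  exists 0; split => //; split => //; split; last by left.
  by move=> w hw; have := hno w; rewrite hw.
have hgt : forall w, a < rho w -> rho w = 1.
  move=> w hw; case/andP: (hr w) => h0 h1; apply/eqP; rewrite eq_le h1 /=.
  rewrite leNgt; apply/negP => hlt.
  have := hamax w; rewrite (lt_trans ha0 hw) hlt => /(_ isT); rewrite leNgt hw //.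
pose L' := filter (predC (pred1 a)) L.
have haL : a \in L.
  case: (hv v0) => [//|[h|h]]; rewrite -/a in h; move: ha0 ha1; rewrite h; lra.
have hL' : (size L' <= N)%N.
  have e := count_predC (pred1 a) L.
  have p : (0 < count (pred1 a) L)%N by rewrite -has_count; apply/hasP; exists a => //=.
  rewrite /L' size_filter.
  move: e p hL; set c1 := count _ L; set c2 := count _ L => e p hL.
  rewrite -ltnS; apply: leq_trans hL; rewrite -e -{1}(add0n c2) ltn_add2r //.
pose rh := fun v => if rho v == a then 1 else rho v.
pose rl := fun v => if rho v == a then b else rho v.
have hmemL' : forall v, rho v != a -> rho v \in L' \/ rho v = 0 \/ rho v = 1.
  move=> v hva; case: (hv v) => [h|h]; last by right.
  by left; rewrite mem_filter /= hva.
have [mh hmh] : exists mu, decomp_ok rh mu.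
  apply: (IH L') => // v; rewrite /rh; case: ifP => h.
  - by rewrite ler01 lexx.
  - exact: hr.
  - by right; right.
  - by apply: hmemL'; rewrite h.
have [ml hml] : exists mu, decomp_ok rl mu.
  apply: (IH L') => // v; rewrite /rl; case: ifP => h.
  - by rewrite hb0 /=; lra.
  - exact: hr.
  - case: hbval => [->|[w [hw hwa]]]; first by right; left.
    by rewrite -hw; apply: hmemL'; rewrite lt_eqF.
  - by apply: hmemL'; rewrite h.
pose t := (1 - a) / (1 - b).
have hb1 : 0 < 1 - b by lra.
have ht_id : t * b + (1 - t) = a.
  rewrite /t; field; exact: lt0r_neq0.
have ht0 : 0 <= t by rewrite /t divr_ge0 //; lra.
have ht1 : t <= 1 by rewrite /t ler_pdivrMr // mul1r; lra.
case: hmh => [mh0 [mh1 [mh2 mh3]]]; case: hml => [ml0 [ml1 [ml2 ml3]]].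
exists (fun S => t * ml S + (1 - t) * mh S); split; [|split; [|split]].
- move=> S; apply: addr_ge0; apply: mulr_ge0 => //; lra.
- by rewrite big_split /= -!mulr_sumr ml1 mh1; ring.
- move=> S hS.
  have : ml S != 0 \/ mh S != 0.
    apply: NNPP => hn; move/eqP: hS; apply.
    have e1 : ml S = 0 by apply/eqP; apply: NNPP => h; apply: hn; left; apply/negP.
    have e2 : mh S = 0 by apply/eqP; apply: NNPP => h; apply: hn; right; apply/negP.
    by rewrite e1 e2; ring.
  case=> [/ml2 [h1 h2]|/mh2 [h1 h2]]; split => v hv0; [apply: h1|apply: h2|apply: h1|apply: h2];
    rewrite /rl /rh hv0; case: ifP => // /eqP; lra.
- move=> v w.
  have -> : \sum_S (t * ml S + (1 - t) * mh S) * cutw v w S =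
            t * (\sum_S ml S * cutw v w S) + (1 - t) * (\sum_S mh S * cutw v w S).
    rewrite !mulr_sumr -big_split /=; apply: eq_bigr => S _; ring.
  apply: le_trans (_ : t * `|rl v - rl w| + (1 - t) * `|rh v - rh w| <= _).
    apply: lerD; [apply: ler_wpM2l => //; exact: ml3 | apply: ler_wpM2l; [lra | exact: mh3]].
  have hx : forall x, x != a -> 0 <= x <= 1 -> (x < a -> x <= b) -> (a < x -> x = 1) ->
     t * `|b - x| + (1 - t) * `|1 - x| <= `|a - x|.
    move=> x hxa /andP [x0 x1] h1 h2; exact: step_ineq.
  rewrite /rl /rh; case: (eqVneq (rho v) a) => hva; case: (eqVneq (rho w) a) => hwa.
  + by rewrite hva hwa !subrr normr0 !mulr0 addr0.
  + rewrite hva.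
    by apply: hx => //; [exact: hbmax | exact: hgt].
  + rewrite hwa !(distrC (rho v)).
    by apply: hx => //; [exact: hbmax | exact: hgt].
  + lra.
Qed.

Lemma decomp (rho : V -> R) : (forall v, 0 <= rho v <= 1) -> exists mu, decomp_ok rho mu.
Proof.
move=> hr; apply: (@decomp_gen _ [seq rho v | v <- enum V]) => // v.
by left; apply: map_f; rewrite mem_enum.
Qed.

End Decomp.
Section Edges.
Variable R : realFieldType.
Variable n : nat.
Notation V := 'I_n.
Definition cutw' (v w : V) (S : {set V}) : R := if (v \in S) != (w \in S) then 1 else 0.

Lemma edge_ends (e : edge n) : exists v w, v != w /\ val e = [set v; w].
Proof. by apply/cards2P; exact: (valP e). Qed.

Lemma card_pair_cap (v w : V) (S : {set V}) : v != w ->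
  (#|[set v; w] :&: S| == 1%N) = ((v \in S) != (w \in S)).
Proof.
move=> hvw.
case hv: (v \in S); case hw: (w \in S) => /=.
- by rewrite (setIidPl _) ?cards2 ?hvw // subUset !sub1set hv hw.
- suff -> : [set v; w] :&: S = [set v] by rewrite cards1.
  apply/setP => x; rewrite !inE; case: (eqVneq x v) => [->|hxv] /=; first by rewrite hv.
  by case: (eqVneq x w) => [->|] //=; rewrite hw.
- suff -> : [set v; w] :&: S = [set w] by rewrite cards1.
  apply/setP => x; rewrite !inE; case: (eqVneq x w) => [->|hxw] /=; first by rewrite hw orbT.
  by case: (eqVneq x v) => [->|] //=; rewrite hv.
- suff -> : [set v; w] :&: S = set0 by rewrite cards0.
  apply/setP => x; rewrite !inE; case: (eqVneq x v) => [->|] /=; first by rewrite hv.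
  by case: (eqVneq x w) => [->|] //=; rewrite hw.
Qed.

Lemma cut_vec_ends (e : edge n) v w S : v != w -> val e = [set v; w] ->
  cut_vec R S e = cutw' v w S.
Proof. by move=> hvw he; rewrite /cut_vec /cutw' he card_pair_cap. Qed.

Lemma edge_uniq (e e0 : edge n) v w : v != w -> val e0 = [set v; w] ->
  (v \in val e) && (w \in val e) = (e == e0).
Proof.
move=> hvw h0; apply/idP/idP => [/andP [hv hw]|/eqP ->]; last by rewrite h0 !inE !eqxx orbT.
apply/eqP; apply: val_inj; rewrite h0; apply/eqP; rewrite eq_sym eqEcard subUset !sub1set hv hw /=.
by rewrite cards2 hvw (eqP (valP e)).
Qed.

Lemma mkedge_proof (v w : V) : v != w -> #|[set v; w]| == 2%N.
Proof. by move=> h; rewrite cards2 h. Qed.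
Definition mkedge (v w : V) (h : v != w) : edge n :=
  exist (fun e : {set V} => #|e| == 2%N) [set v; w] (mkedge_proof h).
End Edges.
Section Form.
Variable R : realFieldType.
Variable n : nat.
Variable T : {set 'I_n}.
Local Notation V := 'I_n.
Local Notation UT := {U : {set V} | U \subset T}.
Local Notation Var := ((UT + (UT * V)) + (UT * edge n))%type.
Local Notation Con := (bool + (UT * V * V * 'I_7))%type.
Definition vl (U : UT) : Var := inl (inl U).
Definition vp (U : UT) (v : V) : Var := inl (inr (U, v)).
Definition vx (U : UT) (e : edge n) : Var := inr (U, e).
Definition econd (v w : V) (e : edge n) := (v != w) && (v \in val e) && (w \in val e).
Definition Lrow (j : Con) : seq (R * Var) :=
  match j with
  | inl true => [seq (1, vl U) | U <- enum {: UT}]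
  | inl false => [seq (-1, vl U) | U <- enum {: UT}]
  | inr (U, v, w, tg) =>
    match val tg with
    | 0 => [:: (-1, vl U)]
    | 1 => if odd #|val U| then [::] else [:: (1, vl U)]
    | 2 => if v \in val U then [:: (1, vp U v)] else [::]
    | 3 => if v \in T :\: val U then [:: (1, vl U); (-1, vp U v)] else [::]
    | 4 => [:: (-1, vp U v)]
    | 5 => [:: (1, vp U v); (-1, vl U)]
    | _ => (1, vp U v) :: (-1, vp U w) :: [seq (-1, vx U e) | e <- enum {: edge n} & econd v w e]
    end
  end.
Definition brow (j : Con) : R := match j with inl true => 1 | inl false => -1 | _ => 0 end.
Definition Mrow (e : edge n) : seq (R * Var) := [seq (1, vx U e) | U <- enum {: UT}].

Lemma evalt_cons (p : R * Var) L y : evalt (p :: L) y = p.1 * y p.2 + evalt L y.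
Proof. by rewrite /evalt big_cons. Qed.
Lemma evalt_nil (y : Var -> R) : evalt [::] y = 0.
Proof. by rewrite /evalt big_nil. Qed.

Lemma evalt_map (I : finType) (c : R) (f : I -> Var) (P : pred I) y :
  evalt [seq (c, f i) | i <- enum I & P i] y = \sum_(i | P i) c * y (f i).
Proof. by rewrite /evalt big_map big_filter big_enum_cond. Qed.

Lemma evalt_map' (I : finType) (c : R) (f : I -> Var) y :
  evalt [seq (c, f i) | i <- enum I] y = \sum_i c * y (f i).
Proof. by rewrite /evalt big_map big_enum. Qed.

Lemma evalt_map1 (I : finType) (f : I -> Var) y :
  evalt [seq ((1 : R), f i) | i <- enum {: I}] y = \sum_i y (f i).
Proof. by rewrite /evalt big_map big_enum; apply: eq_bigr => i _; rewrite mul1r. Qed.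

Lemma evalt_mapN1 (I : finType) (f : I -> Var) y :
  evalt [seq ((-1 : R), f i) | i <- enum {: I}] y = - \sum_i y (f i).
Proof. by rewrite /evalt big_map big_enum -sumrN; apply: eq_bigr => i _; rewrite mulN1r. Qed.

Lemma evalt_mapN1c (I : finType) (f : I -> Var) (P : pred I) y :
  evalt [seq ((-1 : R), f i) | i <- enum {: I} & P i] y = - \sum_(i | P i) y (f i).
Proof. by rewrite /evalt big_map big_filter big_enum_cond -sumrN; apply: eq_bigr => i _; rewrite mulN1r. Qed.

Lemma rows_iff (y : Var -> R) : (0 < n)%N ->
 (forall j, evalt (Lrow j) y <= brow j) <->
 (\sum_U y (vl U) = 1 /\ (forall U, 0 <= y (vl U)) /\ (forall U : UT, ~~ odd #|val U| -> y (vl U) <= 0) /\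
   (forall (U : UT) v, v \in val U -> y (vp U v) <= 0) /\
   (forall (U : UT) v, v \in T :\: val U -> y (vl U) <= y (vp U v)) /\
   (forall U v, 0 <= y (vp U v)) /\ (forall U v, y (vp U v) <= y (vl U)) /\
   (forall U v w, y (vp U v) - y (vp U w) <= \sum_(e | econd v w e) y (vx U e))).
Proof.
move=> hn; pose v0 : V := Ordinal hn.
split.
  move=> h.
  have row : forall U v w (k : nat) (hk : (k < 7)%N), evalt (Lrow (inr (U, v, w, Ordinal hk))) y <= 0.
    by move=> U v w k hk; exact: (h (inr (U, v, w, Ordinal hk))).
  split; [|split; [|split; [|split; [|split; [|split; [|split]]]]]].
  - have h1 := h (inl true); have h2 := h (inl false); move: h1 h2 => /=.
    rewrite evalt_map1 evalt_mapN1; lra.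
  - move=> U; have := row U v0 v0 0%N isT; rewrite /= evalt_cons evalt_nil /=; lra.
  - move=> U hU; have := row U v0 v0 1%N isT; rewrite /= (negbTE hU) evalt_cons evalt_nil /=; lra.
  - move=> U v hv; have := row U v v0 2%N isT; rewrite /= hv evalt_cons evalt_nil /=; lra.
  - move=> U v hv; have := row U v v0 3%N isT; rewrite /= hv !evalt_cons evalt_nil /=; lra.
  - move=> U v; have := row U v v0 4%N isT; rewrite /= evalt_cons evalt_nil /=; lra.
  - move=> U v; have := row U v v0 5%N isT; rewrite /= !evalt_cons evalt_nil /=; lra.
  - move=> U v w; have := row U v w 6%N isT; rewrite /= !evalt_cons evalt_mapN1c /=; lra.
case=> h1 [h2 [h3 [h4 [h5 [h6 [h7 h8]]]]]].
case=> [[]|[[[U v] w] [k hk]]] /=.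
- by rewrite evalt_map1 h1.
- by rewrite evalt_mapN1 h1.
- case: k hk => [|[|[|[|[|[|[|k]]]]]]] hk /=.
  + rewrite evalt_cons evalt_nil /=; have := h2 U; lra.
  + case: ifP => ho; first by rewrite evalt_nil.
    rewrite evalt_cons evalt_nil /=; have := h3 U; rewrite ho => /(_ isT); lra.
  + case: ifP => hv; last by rewrite evalt_nil.
    rewrite evalt_cons evalt_nil /=; have := h4 U v hv; lra.
  + case: ifP => hv; last by rewrite evalt_nil.
    rewrite !evalt_cons evalt_nil /=; have := h5 U v hv; lra.
  + rewrite evalt_cons evalt_nil /=; have := h6 U v; lra.
  + rewrite !evalt_cons evalt_nil /=; have := h7 U v; lra.
  + rewrite !evalt_cons evalt_mapN1c /=; have := h8 U v w; lra.
  + by [].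
Qed.

Lemma econd_pred1 (v w : V) (e0 : edge n) : v != w -> val e0 = [set v; w] ->
  econd v w =1 pred1 e0.
Proof. by move=> hvw he e; rewrite /econd hvw /= (edge_uniq e hvw he). Qed.

Lemma dir1 (x : edge n -> R) (y : Var -> R) : (0 < n)%N ->
  (forall j, evalt (Lrow j) y <= brow j) -> (forall e, x e = evalt (Mrow e) y) ->
  domTcut T x.
Proof.
move=> hn /(rows_iff y hn) [h1 [h2 [h3 [h4 [h5 [h6 [h7 h8]]]]]]] hM.
have hxs : forall e, x e = \sum_U y (vx U e) by move=> e; rewrite hM /Mrow evalt_map1.
pose lam U := y (vl U); pose pi U v := y (vp U v).
have hab : forall (U : UT) v w (e : edge n), v != w -> val e = [set v; w] ->
    `|pi U v - pi U w| <= y (vx U e).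
  move=> U v w e hvw he.
  have hwv : w != v by rewrite eq_sym.
  have he' : val e = [set w; v] by rewrite he setUC.
  have := h8 U v w; have := h8 U w v.
  rewrite (big_pred1 e (econd_pred1 hvw he)) (big_pred1 e (econd_pred1 hwv he')).
  rewrite /pi ler_norml => ha hb; apply/andP; split => //; lra.
pose rho U v := if lam U == 0 then 0 else pi U v / lam U.
have hrho : forall U v, 0 <= rho U v <= 1.
  move=> U v; rewrite /rho; case: eqP => [_|hl]; first by rewrite lexx ler01.
  have hl0 : 0 < lam U by rewrite lt_neqAle eq_sym h2 andbT; apply/eqP.
  apply/andP; split; [apply: divr_ge0; [exact: h6 | exact: ltW] | rewrite ler_pdivrMr // mul1r; exact: h7].
have hmu : forall U, exists mu, decomp_ok (rho U) mu by move=> U; apply: decomp.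
pose mu U := proj1_sig (constructive_indefinite_description _ (hmu U)).
have hmuok : forall U, decomp_ok (rho U) (mu U).
  move=> U; exact: (proj2_sig (constructive_indefinite_description _ (hmu U))).
pose lamS S := \sum_U lam U * mu U S.
exists (fun e => \sum_S lamS S * cut_vec R S e); split.
  exists lamS; split; [|split; [|split]] => //.
  - move=> S; apply: sumr_ge0 => U _; apply: mulr_ge0; [exact: h2 | exact: (hmuok U).1].
  - move=> S hS; apply: big1 => U _.
    case: (eqVneq (lam U) 0) => [->|hl]; first by rewrite mul0r.
    suff -> : mu U S = 0 by rewrite mulr0.
    apply/eqP; apply: contraT => hmS.
    have [hs0 hs1] := (hmuok U).2.2.1 S hmS.
    have hl0 : 0 < lam U by rewrite lt_neqAle eq_sym h2 andbT.
    have hST : S :&: T = val U.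
      apply/setP => v; rewrite inE.
      case hvU : (v \in val U).
        have hvT : v \in T by exact: (subsetP (valP U)).
        rewrite hvT andbT; apply: hs0; rewrite /rho (negbTE hl).
        have : pi U v = 0 by apply/eqP; rewrite eq_le h4 // h6.
        by move=> ->; rewrite mul0r.
      case hvT : (v \in T); last by rewrite andbF.
      rewrite andbT; apply/negbTE; apply: hs1; rewrite /rho (negbTE hl).
      have hvTU : v \in T :\: val U by rewrite inE hvU hvT.
      have : pi U v = lam U by apply/eqP; rewrite eq_le h7 h5.
      by move=> ->; rewrite divff.
    move: hS; rewrite /Tcut_set hST => /h3 hle; move: hl; rewrite eq_le hle h2 //.
  - rewrite /lamS exchange_big /= -h1; apply: eq_bigr => U _.
    by rewrite -mulr_sumr (hmuok U).2.1 mulr1.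
move=> e; rewrite hxs.
have [v [w [hvw he]]] := edge_ends e.
rewrite /lamS.
under eq_bigr do rewrite mulr_suml.
rewrite exchange_big /=; apply: ler_sum => U _.
have -> : \sum_S lam U * mu U S * cut_vec R S e = lam U * \sum_S mu U S * cutw R v w S.
  rewrite mulr_sumr; apply: eq_bigr => S _; by rewrite (cut_vec_ends R S hvw he) mulrA.
apply: le_trans (_ : lam U * `|rho U v - rho U w| <= _).
  by apply: ler_wpM2l; [exact: h2 | exact: (hmuok U).2.2.2].
apply: le_trans (hab U v w e hvw he).
rewrite /rho; case: eqP => [->|hl]; first by rewrite mul0r normr_ge0.
have hl0 : 0 < lam U by rewrite lt_neqAle eq_sym h2 andbT; apply/eqP.
rewrite -mulrBl normrM (ger0_norm (ltW (_ : 0 < (lam U)^-1))); last by rewrite invr_gt0.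
by rewrite mulrCA divff ?mulr1 //; apply/eqP.
Qed.

Lemma dir2 (x : edge n -> R) : (0 < n)%N -> domTcut T x ->
  exists y : Var -> R, (forall j, evalt (Lrow j) y <= brow j) /\ (forall e, x e = evalt (Mrow e) y).
Proof.
move=> hn [yv [[lam0 [hl0 [hlT [hl1 hyv]]]] hle]].
pose pS := fun S : {set V} => (exist _ (S :&: T) (subsetIr S T) : UT).
have hpS : forall S (U : UT), pS S == U -> S :&: T = val U.
  by move=> S U /eqP <-.
pose lamU := fun U : UT => \sum_(S | pS S == U) lam0 S.
pose ind := fun (v : V) (S : {set V}) => if v \in S then (0 : R) else 1.
pose piU := fun (U : UT) (v : V) => \sum_(S | pS S == U) lam0 S * ind v S.
pose U0 : UT := exist _ set0 (sub0set T).
pose xxU := fun (U : UT) (e : edge n) =>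
  \sum_(S | pS S == U) lam0 S * cut_vec R S e + (if U == U0 then x e - yv e else 0).
exists (fun z => match z with inl (inl U) => lamU U | inl (inr (U, v)) => piU U v | inr (U, e) => xxU U e end).
have hsl : forall e, 0 <= x e - yv e by move=> e; rewrite subr_ge0.
split.
  apply/rows_iff => //=.
  split; [|split; [|split; [|split; [|split; [|split; [|split]]]]]].
  - rewrite -hl1 (partition_big pS predT) //=.
  - by move=> U; apply: sumr_ge0 => S _.
  - move=> U hU; rewrite /lamU big1 // => S /hpS hS; apply: hlT; by rewrite /Tcut_set hS.
  - move=> U v hv; rewrite /piU big1 // => S /hpS hS.
    have : v \in S :&: T by rewrite hS.
    by rewrite inE /ind => /andP [-> _]; rewrite mulr0.
  - move=> U v hv; apply: ler_sum => S /hpS hS.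
    have hvS : v \notin S.
      apply/negP => hvS; move: hv; rewrite inE -hS inE hvS /=.
      by case: (v \in T).
    by rewrite /ind (negbTE hvS) mulr1.
  - by move=> U v; apply: sumr_ge0 => S _; apply: mulr_ge0 => //; rewrite /ind; case: ifP.
  - move=> U v; apply: ler_sum => S _; rewrite /ind; case: ifP => _; rewrite ?mulr0 ?mulr1 //.
  - move=> U v w; case: (eqVneq v w) => [->|hvw].
      rewrite subrr big_pred0 // => e; by rewrite /econd eqxx.
    pose e0 := mkedge hvw.
    have he0 : val e0 = [set v; w] by [].
    rewrite (big_pred1 e0 (econd_pred1 hvw he0)) /xxU.
    apply: le_trans (_ : \sum_(S | pS S == U) lam0 S * cut_vec R S e0 <= _); last first.
      by rewrite lerDl; case: ifP.
    rewrite /piU -sumrB; apply: ler_sum => S _.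
    rewrite -mulrBr; apply: ler_wpM2l => //.
    rewrite (cut_vec_ends R S hvw he0) /cutw' /ind.
    by case: (v \in S); case: (w \in S) => /=; lra.
move=> e; rewrite /Mrow evalt_map1 /= /xxU big_split /=.
have hpart : forall F : {set V} -> R, \sum_U \sum_(S | pS S == U) F S = \sum_S F S.
  by move=> F; rewrite (partition_big pS predT).
rewrite hpart -hyv.
rewrite (bigD1 U0) //= eqxx big1 ?addr0; last by move=> U /negbTE ->.
ring.
Qed.
End Form.

Unset Implicit Arguments.
Theorem corollary3 (R : realFieldType) :
  exists C : R, 0 < C /\
    forall (n : nat) (T : {set 'I_n}),
      exists k : nat,
        (k%:R <= C * (n%:R) ^+ 2 * 2 ^+ #|T|) /\
        xc_at_most (@domTcut R n T) k.
Proof.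
exists 10%:R; split; first by rewrite ltr0n.
case=> [|n] T.
  exists 0%N; split; first by rewrite !mulr0n expr0n /= mulr0 mul0r.
  apply: xc_empty => x [y [[lam [_ [hT [h1 _]]]] _]].
  move: h1; rewrite big1 => [|S _]; first by move/eqP; rewrite eq_sym oner_eq0.
  apply: hT; rewrite /Tcut_set.
  suff -> : #|S :&: T| = 0%N by [].
  by have := max_card (mem (S :&: T)); rewrite card_ord leqn0 => /eqP.
exists #|{: (bool + ({U : {set 'I_n.+1} | U \subset T} * 'I_n.+1 * 'I_n.+1 * 'I_7))%type}|.+1.
split; last first.
  apply: (xc_of_terms (L := @Lrow R n.+1 T) (b := @brow R n.+1 T) (Mt := @Mrow R n.+1 T)) => x.
  split; first exact: dir2.
  by case=> y [h1 h2]; exact: (dir1 (y := y)).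
have hK : #|{: {U : {set 'I_n.+1} | U \subset T}}| = (2 ^ #|T|)%N.
  by rewrite card_sig -card_powerset; apply: eq_card => A; rewrite powersetE inE.
rewrite card_sum !card_prod hK card_bool !card_ord.
rewrite -natrX -(natrX _ 2) -!natrM ler_nat.
have : (0 < 2 ^ #|T|)%N by rewrite expn_gt0.
move: (2 ^ #|T|)%N => K hK0.
nia.
Qed.
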